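(* Let $X$ be a real Banach space, $h:X\to\mathbb R\cup\{+\infty\}$ proper and lower semicontinuous, $\bar x$ a global minimizer of $h$, and $p,q\in(1,\infty)$ with $p^{-1}+q^{-1}=1$. If $x\in X$ and $\xi\in X^*$ satisfy $x\in\operatorname{argmin}_{y\in X}\{\sqrt[p]{h(y)-h(\bar x)}-\langle\xi,y\rangle\}$, then $$x\in\operatorname{argmin}_{y\in X}\Big\{h(y)-p\sqrt[q]{h(x)-h(\bar x)}\,\langle\xi,y\rangle\Big\}.$$
   Context: Here $\sqrt[p]{+\infty}=+\infty$. *)

(* Defs.v *)
From HB Require Import structures.
From mathcomp Require Import all_boot all_order all_algebra.
From mathcomp Require Import all_classical all_reals all_analysis.
Set Implicit Arguments. Unset Strict Implicit. Unset Printing Implicit Defensive.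
Import Order.TTheory GRing.Theory Num.Theory.

Definition argmin {T : Type} {R : realType} (f : T -> \bar R) : set T :=
  [set x | forall y, (f x <= f y)%E].

Definition proper_fun {T : Type} {R : realType} (h : T -> \bar R) : Prop :=
  (forall y, h y <> -oo%E) /\ (exists y, h y <> +oo%E).

(* Main.v *)
Require Import Defs.
From HB Require Import structures.
From mathcomp Require Import all_boot all_order all_algebra.
From mathcomp Require Import all_classical all_reals all_analysis.
From mathcomp Require Import ring lra.
Import Order.TTheory GRing.Theory Num.Theory.
Local Open Scope ring_scope.

Lemma key (R : realType) (a b u v p q : R) : 0 <= a -> 0 <= b -> 1 < p -> 1 < q ->
  p^-1 + q^-1 = 1 -> a `^ p^-1 - u <= b `^ p^-1 - v ->
  p * a `^ q^-1 * v <= b - a + p * a `^ q^-1 * u.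
Proof.
move=> a0 b0 p1 q1 pq H.
set A := a `^ q^-1; set t := b `^ p^-1; set s := a `^ p^-1.
have p0 : 0 < p by lra.
have q0 : 0 < q by lra.
have Y := @conjugate_powR R A t q p (powR_ge0 _ _) (powR_ge0 _ _) q0 p0 ltac:(lra).
have EA : A `^ q = a.
  by rewrite /A -powRrM mulVf ?gt_eqF// powRr1.
have Et : t `^ p = b.
  by rewrite /t -powRrM mulVf ?gt_eqF// powRr1.
have As : A * s = a.
  rewrite /A /s -powRD; first by rewrite addrC pq powRr1.
  by rewrite addrC pq oner_eq0.
rewrite EA Et in Y.
have A0 : 0 <= A by exact: powR_ge0.
have H2 : v - u <= t - s by rewrite /t /s; lra.
have H3 : p * A * (v - u) <= p * A * (t - s) by rewrite ler_wpM2l // mulr_ge0 // ltW.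
have H4 : p * (A * t) <= p * (a / q + b / p) by rewrite ler_wpM2l // ltW.
have pq' : p / q = p - 1.
  have : p * (p^-1 + q^-1) = p by rewrite pq mulr1.
  rewrite mulrDr mulfV ?gt_eqF //; lra.
have E1 : p * (a / q + b / p) = a * (p - 1) + b.
  by rewrite mulrDr mulrCA -pq' [p * (b / p)]mulrCA mulfV ?gt_eqF // mulr1.
have H5 : p * A * (t - s) = p * (A * t) - p * a by rewrite -As; ring.
rewrite H5 E1 in H3 H4 *.
rewrite mulrBr in H3.
move: H3 H4; rewrite mulrBr mulr1.
rewrite [p * a]mulrC; clearbody A t s.
move=> *; lra.
Qed.

Local Open Scope classical_set_scope.
Theorem lemma2p4 (R : realType) (X : completeNormedModType R)
    (h : X -> \bar R) (xbar : X) (p q : R) (x : X) (xi : {scalar X}) :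
  proper_fun h -> lower_semicontinuous h ->
  (forall y, (h xbar <= h y)%E) ->
  1 < p -> 1 < q -> p^-1 + q^-1 = 1 ->
  continuous xi ->
  argmin (fun y => (poweR (h y - h xbar) p^-1 - (xi y)%:E)%E) x ->
  argmin (fun y => (h y - p%:E * poweR (h x - h xbar) q^-1 * (xi y)%:E)%E) x.
Proof.
move=> [hNy [y0 hy0]] _ hmin p1 q1 pq _ Hx y.
have pi0 : p^-1 != 0 by rewrite invr_neq0 // gt_eqF //; lra.
case Ey0: (h y0) hy0 => [r0| |] // _; last by have := hNy y0; rewrite Ey0.
have := hmin y0; have := hmin x; have := hmin y; have := Hx y0; have := Hx y;
  rewrite /= Ey0.
case: (h xbar) (hNy xbar) => [c| |] // _.
case: (h x) (hNy x) => [hx| |] // _.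
case: (h y) (hNy y) => [hy| |] // _ /=.
- rewrite -!EFinD !lee_fin => H _ Hy Hx' _.
  have := @key R (hx - c) (hy - c) (xi x) (xi y) p q.
  rewrite subr_ge0 Hx' subr_ge0 Hy => /(_ isT isT p1 q1 pq H).
  lra.
- by move=> *; exact: leey.
- move=> _; rewrite /= (negbTE pi0) => H; exfalso; move: H.
  by rewrite -EFinD leye_eq.
Qed.
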